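(* Assume $\mathcal E$ is stable under pullback and $\mathcal F\subseteq\mathcal E$, and let $s$ be the discrete closure operator on $\mathcal A$, $s_A(m)=m$ for all $A\in\mathcal A$, $m\in\operatorname{sub}_{\mathcal A}A$. Let $X\in\mathcal X$ be such that $R$ preserves products with $X$ (i.e. $\rho_{X\times Y}=\rho_X\times\rho_Y$ for every $Y\in\mathcal X$). Then $X$ is $s^\rho$-compact if and only if $\rho_X\in\mathcal E$.
   Context: Standing setting. $\mathcal X$ and $\mathcal A$ are finitely complete categories; $\mathcal X$ carries a proper factorization system $(\mathcal E,\mathcal M)$ and $\mathcal A$ a proper factorization system $(\mathcal F,\mathcal N)$ (proper: every member of $\mathcal E$, resp. $\mathcal F$, is an epimorphism and every member of $\mathcal M$, resp. $\mathcal N$, is a monomorphism). $\mathcal A$ is a full reflective subcategory of $\mathcal X$ with reflector $R:\mathcal X\to\mathcal A$ and reflection (unit) $\rho_X:X\to RX$; as in the paper's setting, $\mathcal N\subseteq\mathcal M$ and $R\mathcal E\subseteq\mathcal F$. For $X\in\mathcal X$, $\operatorname{sub}X$ is the class $\mathcal M/X$ of $\mathcal M$-morphisms with codomain $X$, preordered by $m\le n$ iff $m=nj$ for some morphism $j$; for $A\in\mathcal A$, $\operatorname{sub}_{\mathcal A}A=\mathcal N/A$ with the same preorder. For $f:X\to Y$ and $m\in\operatorname{sub}X$, the image $f(m)\in\operatorname{sub}Y$ is the $\mathcal M$-part of the $(\mathcal E,\mathcal M)$-factorization of $fm$, and for $n\in\operatorname{sub}Y$ the preimage $f^{-1}(n)\in\operatorname{sub}X$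 is the pullback of $n$ along $f$ (analogously in $\mathcal A$ using $(\mathcal F,\mathcal N)$). A closure operator $c$ on $\mathcal A$ (with respect to $\mathcal N$) is a family of maps $c_A:\operatorname{sub}_{\mathcal A}A\to\operatorname{sub}_{\mathcal A}A$ ($A\in\mathcal A$) such that $m\le c_A(m)$, $m\le n\Rightarrow c_A(m)\le c_A(n)$, and $f(c_A(m))\le c_B(f(m))$ for every morphism $f:A\to B$ of $\mathcal A$; closure operators on $\mathcal X$ (with respect to $\mathcal M$) are defined likewise. For an arbitrary morphism $g:M\to A$ of $\mathcal A$, write $g(1_M)$ for the $\mathcal N$-part of its $(\mathcal F,\mathcal N)$-factorization and put $c_A(g):=c_A(g(1_M))$. The $R$-initial lift of $c$ is the closure operator $c^\rho$ on $\mathcal X$ given by $c^\rho_X(m)=\rho_X^{-1}(c_{RX}(Rm))$ for $X\in\mathcal X$, $m\in\operatorname{sub}X$. For a closure operator $d$ on a category, an object $X$ is $d$-compact if for every object $Y$ the projection $\pi_Y:X\times Y\to Y$ is $d$-preserving, i.e. $\pi_Y(d_{X\times Y}(m))=d_Y(\pi_Y(m))$ for every subobject $m$ of $X\times Y$. *)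

(* Defs.v *)
From Stdlib Require Import Setoid.
Set Implicit Arguments.
Unset Strict Implicit.

Record Cat := {
  Ob :> Type;
  Hom : Ob -> Ob -> Type;
  comp : forall A B D, Hom B D -> Hom A B -> Hom A D;
  idm : forall A, Hom A A;
  comp_assoc : forall A B D E (h : Hom D E) (g : Hom B D) (f : Hom A B),
      comp h (comp g f) = comp (comp h g) f;
  comp_id_l : forall A B (f : Hom A B), comp (idm B) f = f;
  comp_id_r : forall A B (f : Hom A B), comp f (idm A) = f }.
Arguments Hom {c}.
Arguments comp {c A B D}.
Arguments idm {c}.
Notation "g ⊚ f" := (comp g f) (at level 40, left associativity).

Section Basic.
Variable C : Cat.
Definition is_iso (A B : C) (f : Hom A B) : Prop :=
  exists g : Hom B A, g ⊚ f = idm A /\ f ⊚ g = idm B.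
Definition mono (A B : C) (f : Hom A B) : Prop :=
  forall Z (u v : Hom Z A), f ⊚ u = f ⊚ v -> u = v.
Definition epi (A B : C) (f : Hom A B) : Prop :=
  forall Z (u v : Hom B Z), u ⊚ f = v ⊚ f -> u = v.
Definition is_terminal (T : C) : Prop :=
  forall A : C, exists t : Hom A T, forall t' : Hom A T, t' = t.
Definition is_product (A B P : C) (p1 : Hom P A) (p2 : Hom P B) : Prop :=
  forall Z (f : Hom Z A) (g : Hom Z B), exists! h : Hom Z P, p1 ⊚ h = f /\ p2 ⊚ h = g.
Definition is_pullback (A B D P : C) (f : Hom A D) (g : Hom B D)
    (p : Hom P A) (q : Hom P B) : Prop :=
  f ⊚ p = g ⊚ q /\
  forall Z (u : Hom Z A) (v : Hom Z B), f ⊚ u = g ⊚ v ->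
    exists! h : Hom Z P, p ⊚ h = u /\ q ⊚ h = v.
Definition finitely_complete : Prop :=
  (exists T : C, is_terminal T) /\
  forall (A B D : C) (f : Hom A D) (g : Hom B D),
    exists (P : C) (p : Hom P A) (q : Hom P B), is_pullback f g p q.
End Basic.

Record FinLim (C : Cat) := {
  term : C;
  term_ok : is_terminal term;
  prod : C -> C -> C;
  pr1 : forall A B, Hom (prod A B) A;
  pr2 : forall A B, Hom (prod A B) B;
  prod_ok : forall A B, is_product (pr1 A B) (pr2 A B);
  pb : forall A B D (f : Hom A D) (g : Hom B D), C;
  pb1 : forall A B D (f : Hom A D) (g : Hom B D), Hom (pb f g) A;
  pb2 : forall A B D (f : Hom A D) (g : Hom B D), Hom (pb f g) B;
  pb_ok : forall A B D (f : Hom A D) (g : Hom B D), is_pullback f g (pb1 f g) (pb2 f g) }.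
Arguments prod {C} f0 _ _.
Arguments pr1 {C} f0 A B.
Arguments pr2 {C} f0 A B.
Arguments pb {C} f0 {A B D}.
Arguments pb1 {C} f0 {A B D}.
Arguments pb2 {C} f0 {A B D}.

Record FactSys (C : Cat) := {
  fE : forall A B : C, Hom A B -> Prop;
  fM : forall A B : C, Hom A B -> Prop;
  fmid : forall A B : C, Hom A B -> C;
  fe : forall A B (f : Hom A B), Hom A (fmid f);
  fm : forall A B (f : Hom A B), Hom (fmid f) B;
  fact_eq : forall A B (f : Hom A B), fm f ⊚ fe f = f;
  fe_E : forall A B (f : Hom A B), fE (fe f);
  fm_M : forall A B (f : Hom A B), fM (fm f);
  E_iso_l : forall A B B' (e : Hom A B) (h : Hom B B'), fE e -> is_iso h -> fE (h ⊚ e);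
  E_iso_r : forall A' A B (h : Hom A' A) (e : Hom A B), fE e -> is_iso h -> fE (e ⊚ h);
  M_iso_l : forall A B B' (m : Hom A B) (h : Hom B B'), fM m -> is_iso h -> fM (h ⊚ m);
  M_iso_r : forall A' A B (h : Hom A' A) (m : Hom A B), fM m -> is_iso h -> fM (m ⊚ h);
  diag : forall A B D E (e : Hom A B) (m : Hom D E) (u : Hom A D) (v : Hom B E),
      fE e -> fM m -> v ⊚ e = m ⊚ u ->
      exists! d : Hom B D, d ⊚ e = u /\ m ⊚ d = v }.
Arguments fE {C} f0 {A B}.
Arguments fM {C} f0 {A B}.
Arguments fmid {C} f0 {A B}.
Arguments fe {C} f0 {A B}.
Arguments fm {C} f0 {A B}.
Arguments fm_M {C} f0 {A B}.

Definition proper (C : Cat) (F : FactSys C) : Prop :=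
  (forall (A B : C) (e : Hom A B), fE F e -> epi e) /\
  (forall (A B : C) (m : Hom A B), fM F m -> mono m).

Definition pullback_stable_E (C : Cat) (F : FactSys C) : Prop :=
  forall (A B D P : C) (f : Hom A D) (g : Hom B D) (p : Hom P A) (q : Hom P B),
    is_pullback f g p q -> fE F g -> fE F p.

Section Sub.
Variables (C : Cat) (L : FinLim C) (F : FactSys C).

Definition sub (X : C) : Type := { M : C & { m : Hom M X | fM F m } }.
Definition sdom (X : C) (m : sub X) : C := projT1 m.
Definition sarr (X : C) (m : sub X) : Hom (sdom m) X := proj1_sig (projT2 m).
Definition sle (X : C) (m n : sub X) : Prop := exists j : Hom (sdom m) (sdom n), sarr m = sarr n ⊚ j.
Definition sequiv (X : C) (m n : sub X) : Prop := sle m n /\ sle n m.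

Definition image (X Y : C) (f : Hom X Y) (m : sub X) : sub Y :=
  existT _ (fmid F (f ⊚ sarr m)) (exist _ (fm F (f ⊚ sarr m)) (fm_M F _)).

Lemma pb_M (A B D : C) (f : Hom A D) (n : Hom B D) : fM F n -> fM F (pb1 L f n).
Proof.
  intro Hn.
  destruct (pb_ok L f n) as [Hsq Hu].
  set (p := pb1 L f n) in *. set (q := pb2 L f n) in *.
  pose proof (fact_eq F p) as Hf.
  set (e := fe F p) in *. set (m := fm F p) in *.
  assert (Hsq2 : (f ⊚ m) ⊚ e = n ⊚ q) by (rewrite <- comp_assoc, Hf; exact Hsq).
  destruct (diag (fe_E F p) Hn Hsq2) as [d [[Hd1 Hd2] _]].
  destruct (Hu _ m d (eq_sym Hd2)) as [k [[Hk1 Hk2] _]].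
  assert (Hke : k ⊚ e = idm _).
  { destruct (Hu _ p q Hsq) as [h [_ Hh]].
    rewrite <- (Hh (k ⊚ e)), <- (Hh (idm _)); auto.
    - split; apply comp_id_r.
    - split; rewrite comp_assoc; [rewrite Hk1; exact Hf | rewrite Hk2; exact Hd1]. }
  assert (Hek : e ⊚ k = idm _).
  { destruct (diag (fe_E F p) (fm_M F p) (eq_refl (m ⊚ e))) as [h [_ Hh]].
    rewrite <- (Hh (e ⊚ k)), <- (Hh (idm _)); auto.
    - split; [apply comp_id_l | apply comp_id_r].
    - split.
      + fold e. rewrite <- comp_assoc, Hke. apply comp_id_r.
      + fold m e. rewrite comp_assoc, Hf. exact Hk1. }
  rewrite <- Hf. apply M_iso_r; [apply fm_M | exists k; auto].
Qed.

Definition preimage (X Y : C) (f : Hom X Y) (n : sub Y) : sub X :=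
  existT _ (pb L f (sarr n)) (exist _ (pb1 L f (sarr n)) (pb_M f (proj2_sig (projT2 n)))).

Definition ClOp : Type := forall X : C, sub X -> sub X.
Definition is_closure_operator (c : ClOp) : Prop :=
  (forall X (m : sub X), sle m (c X m)) /\
  (forall X (m n : sub X), sle m n -> sle (c X m) (c X n)) /\
  (forall X Y (f : Hom X Y) (m : sub X), sle (image f (c X m)) (c Y (image f m))).

Definition preserving (d : ClOp) (X Y : C) (f : Hom X Y) : Prop :=
  forall m : sub X, sequiv (image f (d X m)) (d Y (image f m)).
Definition compact (d : ClOp) (X : C) : Prop :=
  forall Y : C, preserving d (pr2 L X Y).
End Sub.
Arguments sub {C} F X.
Arguments image {C} F {X Y} f m.
Arguments preimage {C} L F {X Y} f n.
Arguments compact {C} L F d X.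

Section FullSub.
Variables (C : Cat) (P : C -> Prop).
Definition FullSub : Cat.
Proof.
  refine {| Ob := { x : C | P x };
            Hom := fun a b => Hom (proj1_sig a) (proj1_sig b);
            comp := fun a b d g f => g ⊚ f;
            idm := fun a => idm (proj1_sig a) |}.
  - intros; apply comp_assoc.
  - intros; apply comp_id_l.
  - intros; apply comp_id_r.
Defined.
End FullSub.

Record Reflection (C : Cat) (P : C -> Prop) := {
  rO : C -> FullSub P;
  rho : forall X : C, Hom X (proj1_sig (rO X));
  rext : forall (X : C) (A : FullSub P), Hom X (proj1_sig A) -> @Hom (FullSub P) (rO X) A;
  rext_eq : forall X A (f : Hom X (proj1_sig A)), (rext f : @Hom C _ _) ⊚ rho X = f;
  rext_uniq : forall X A (f : Hom X (proj1_sig A)) (g : @Hom (FullSub P) (rO X) A),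
      (g : @Hom C _ _) ⊚ rho X = f -> g = rext f }.
Arguments rO {C P} r X.
Arguments rho {C P} r X.
Arguments rext {C P} r {X A} f.

Definition Rmor (C : Cat) (P : C -> Prop) (R : Reflection P) (X Y : C) (f : Hom X Y)
  : @Hom (FullSub P) (rO R X) (rO R Y) := rext R (rho R Y ⊚ f).
Arguments Rmor {C P} R {X Y} f.

(* R preserves products with X: (R(X x Y), R pi_X, R pi_Y) is a product of RX and RY,
   i.e. the comparison R(X x Y) -> RX x RY is invertible, i.e. rho_{XxY} = rho_X x rho_Y *)
Definition preserves_products_with (C : Cat) (L : FinLim C) (P : C -> Prop)
    (R : Reflection P) (X : C) : Prop :=
  forall Y : C, is_product (A := proj1_sig (rO R X)) (B := proj1_sig (rO R Y))
                  (Rmor R (pr1 L X Y) : @Hom C _ _) (Rmor R (pr2 L X Y) : @Hom C _ _).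

Section Lift.
Variables (C : Cat) (L : FinLim C) (FX : FactSys C) (P : C -> Prop)
  (R : Reflection P) (FA : FactSys (FullSub P))
  (NM : forall (A B : FullSub P) (f : @Hom (FullSub P) A B), fM FA f -> fM FX (f : @Hom C _ _)).

Definition img1 (M A : FullSub P) (g : @Hom (FullSub P) M A) : sub FA A :=
  existT _ (fmid FA g) (exist _ (fm FA g) (fm_M FA g)).

Definition incl (A : FullSub P) (n : sub FA A) : sub FX (proj1_sig A) :=
  existT _ (proj1_sig (projT1 n))
    (exist _ (proj1_sig (projT2 n) : @Hom C _ _) (NM (proj2_sig (projT2 n)))).

Definition discrete : ClOp FA := fun A m => m.

(* R-initial lift: c^rho_X(m) = rho_X^{-1}(c_{RX}(Rm)) *)
Definition initial_lift (c : ClOp FA) : ClOp FX :=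
  fun X m => preimage L FX (rho R X) (incl (c (rO R X) (img1 (Rmor R (sarr m))))).
End Lift.
Arguments initial_lift {C} L FX {P} R FA NM c _ _.
Arguments discrete {C P} FA _ _.

(* Main.v *)
Require Import Defs.

Section Gen.
Variables (C : Cat) (F : FactSys C) (HF : proper F).

Lemma split_M_iso (A B : C) (m : Hom A B) (d : Hom B A) :
  fM F m -> m ⊚ d = idm B -> is_iso m.
Proof.
  intros Hm Hd. exists d. split; auto.
  apply (proj2 HF _ _ m Hm). rewrite comp_assoc, Hd, comp_id_l, comp_id_r. reflexivity.
Qed.

Lemma E_of_split (A B : C) (g : Hom A B) (d : Hom B (fmid F g)) :
  fm F g ⊚ d = idm B -> fE F g.
Proof.
  intro Hd. rewrite <- (fact_eq F g). apply E_iso_l. apply fe_E.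
  eapply split_M_iso; [apply fm_M | exact Hd].
Qed.

Lemma E_comp (A B D : C) (e1 : Hom A B) (e2 : Hom B D) :
  fE F e1 -> fE F e2 -> fE F (e2 ⊚ e1).
Proof.
  intros H1 H2. set (g := e2 ⊚ e1).
  assert (Hs : e2 ⊚ e1 = fm F g ⊚ fe F g) by (rewrite fact_eq; reflexivity).
  destruct (diag H1 (fm_M F g) Hs) as [d1 [[Hd1 Hd1'] _]].
  assert (Hs2 : idm D ⊚ e2 = fm F g ⊚ d1) by (rewrite comp_id_l; auto).
  destruct (diag H2 (fm_M F g) Hs2) as [d2 [[_ Hd2'] _]].
  eapply E_of_split; eauto.
Qed.

Lemma E_cancel (A B D : C) (f : Hom A B) (g : Hom B D) :
  fE F (g ⊚ f) -> fE F g.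
Proof.
  intros H.
  assert (Hs : idm D ⊚ (g ⊚ f) = fm F g ⊚ (fe F g ⊚ f))
    by (rewrite comp_id_l, comp_assoc, fact_eq; reflexivity).
  destruct (diag H (fm_M F g) Hs) as [d [[_ Hd] _]].
  eapply E_of_split; eauto.
Qed.
End Gen.

Section Refl.
Variables (C : Cat) (P : C -> Prop) (R : Reflection P).

Lemma rnat (X Y : C) (f : Hom X Y) :
  (Rmor R f : @Hom C _ _) ⊚ rho R X = rho R Y ⊚ f.
Proof. unfold Rmor. apply rext_eq. Qed.

Lemma Rcomp (X Y Z : C) (f : Hom X Y) (g : Hom Y Z) :
  (Rmor R (g ⊚ f) : @Hom C _ _) = (Rmor R g : @Hom C _ _) ⊚ (Rmor R f : @Hom C _ _).
Proof.
  symmetry. unfold Rmor at 3. apply (@rext_uniq C P R X (rO R Z)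
     (rho R Z ⊚ (g ⊚ f)) ((Rmor R g : @Hom C _ _) ⊚ (Rmor R f : @Hom C _ _))).
  simpl. rewrite <- comp_assoc, rnat, comp_assoc, rnat, comp_assoc. reflexivity.
Qed.

Lemma Rrho (X : C) :
  (Rmor R (rho R X) : @Hom C _ _) = rho R (proj1_sig (rO R X)).
Proof.
  symmetry. unfold Rmor.
  apply (@rext_uniq C P R X (rO R (proj1_sig (rO R X))) _ (rho R (proj1_sig (rO R X)))).
  reflexivity.
Qed.

Lemma rho_mono (A : FullSub P) : mono (rho R (proj1_sig A)).
Proof.
  intros Z u v H.
  pose proof (rext_eq R (X:=proj1_sig A) (A:=A) (idm _)) as E.
  rewrite <- (comp_id_l u), <- (comp_id_l v), <- E, <- !comp_assoc, H. reflexivity.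
Qed.
End Refl.

Lemma epiA (CX : Cat) (P : CX -> Prop) (FA : FactSys (FullSub P)) (properA : proper FA)
  (A B Z : FullSub P) (e : @Hom (FullSub P) A B)
  (u v : @Hom CX (proj1_sig B) (proj1_sig Z)) :
  fE FA e -> u ⊚ (e : @Hom CX _ _) = v ⊚ (e : @Hom CX _ _) -> u = v.
Proof. intros He H. exact (proj1 properA A B e He Z u v H). Qed.

Lemma factA (CX : Cat) (P : CX -> Prop) (FA : FactSys (FullSub P))
  (A B : FullSub P) (f : @Hom (FullSub P) A B) :
  (fm FA f : @Hom CX _ _) ⊚ (fe FA f : @Hom CX _ _) = (f : @Hom CX _ _).
Proof. exact (fact_eq FA f). Qed.

Lemma fwd
  (CX : Cat) (LX : FinLim CX) (FX : FactSys CX)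
  (P : CX -> Prop) (R : Reflection P) (FA : FactSys (FullSub P))
  (properX : proper FX) (properA : proper FA)
  (NM : forall (A B : FullSub P) (f : @Hom (FullSub P) A B), fM FA f -> fM FX (f : @Hom CX _ _))
  (X : CX) :
  compact LX FX (initial_lift LX FX R FA NM (discrete FA)) X -> fE FX (rho R X).
Proof.
  intro Hc.
  destruct (prod_ok LX (idm X) (rho R X)) as [g [[Hg1 Hg2] _]].
  set (m := existT (fun M => {m : Hom M (prod LX X (proj1_sig (rO R X))) | fM FX m}) (fmid FX g) (exist _ (fm FX g) (fm_M FX g)) : sub FX (prod LX X (proj1_sig (rO R X)))).
  pose proof (Hc (proj1_sig (rO R X)) m) as HcB. unfold preserving in HcB. destruct HcB as [_ HcB]. destruct HcB as [j Hj].
  set (p1 := pb1 LX (rho R (prod LX X (proj1_sig (rO R X)))) (fm FA (Rmor R (fm FX g)))).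
  assert (Hj' : pb1 LX (rho R (proj1_sig (rO R X))) (fm FA (Rmor R (fm FX (pr2 LX X _ ⊚ fm FX g))))
     = fm FX (pr2 LX X _ ⊚ p1) ⊚ j) by exact Hj.
  clear Hj.
  set (p2 := pb2 LX (rho R (prod LX X (proj1_sig (rO R X)))) (fm FA (Rmor R (fm FX g)))).
  assert (Hfg : pr2 LX _ _ ⊚ fm FX g = rho R X ⊚ (pr1 LX _ _ ⊚ fm FX g)).
  { apply (proj1 properX _ _ _ (fe_E FX g)).
    rewrite <- !comp_assoc, fact_eq, Hg2, Hg1, comp_id_r. reflexivity. }
  assert (K : (Rmor R (pr2 LX X (proj1_sig (rO R X))) : @Hom CX _ _) ⊚ (fm FA (Rmor R (fm FX g)) : @Hom CX _ _)
            = ((Rmor R (rho R X) : @Hom CX _ _) ⊚ (Rmor R (pr1 LX X (proj1_sig (rO R X))) : @Hom CX _ _)) ⊚ (fm FA (Rmor R (fm FX g)) : @Hom CX _ _)).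
  { apply (@epiA CX P FA properA _ _ _ (fe FA (Rmor R (fm FX g)))); [apply fe_E|].
    rewrite <- !comp_assoc, factA, <- !Rcomp, Hfg, comp_assoc. reflexivity. }
  assert (Hpb : rho R _ ⊚ p1 = (fm FA (Rmor R (fm FX g)) : @Hom CX _ _) ⊚ p2) by exact (proj1 (pb_ok LX _ _)).
  assert (Key : pr2 LX _ _ ⊚ p1 = rho R X ⊚ (pr1 LX _ _ ⊚ p1)).
  { apply (@rho_mono CX P R (rO R X)).
    rewrite comp_assoc, <- rnat, <- comp_assoc, Hpb.
    rewrite (comp_assoc _ (rho R X)), <- rnat, <- comp_assoc.
    rewrite (comp_assoc _ _ p1), <- rnat, <- comp_assoc, Hpb.
    rewrite !comp_assoc, K. reflexivity. }
  assert (Hsq : fm FX (pr2 LX _ _ ⊚ p1) ⊚ fe FX (pr2 LX _ _ ⊚ p1)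
              = fm FX (rho R X) ⊚ (fe FX (rho R X) ⊚ (pr1 LX _ _ ⊚ p1))).
  { rewrite comp_assoc, !fact_eq. exact Key. }
  destruct (diag (fe_E FX _) (fm_M FX (rho R X)) Hsq) as [j2 [[_ Hj2] _]].
  assert (Ht : (pr2 LX X _ ⊚ fm FX g) ⊚ fe FX g = rho R X)
    by (rewrite <- comp_assoc, fact_eq; exact Hg2).
  set (t := pr2 LX X (proj1_sig (rO R X)) ⊚ fm FX g) in *.
  set (k := (fe FA (Rmor R (fm FX t)) : @Hom CX _ _) ⊚ ((Rmor R (fe FX t) : @Hom CX _ _) ⊚ (Rmor R (fe FX g) : @Hom CX _ _))).
  assert (Hk : rho R (proj1_sig (rO R X)) ⊚ idm _ = (fm FA (Rmor R (fm FX t)) : @Hom CX _ _) ⊚ k).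
  { rewrite comp_id_r. unfold k. rewrite comp_assoc, factA, <- !Rcomp, comp_assoc, fact_eq, Ht, Rrho.
    reflexivity. }
  destruct (proj2 (pb_ok LX (rho R (proj1_sig (rO R X))) (fm FA (Rmor R (fm FX t)) : @Hom CX _ _)) _ _ _ Hk)
    as [h [[Hh1 _] _]].
  apply (@E_of_split CX FX properX _ _ (rho R X) (j2 ⊚ (j ⊚ h))).
  rewrite <- Hh1, Hj', comp_assoc, Hj2, comp_assoc. reflexivity.
Qed.

Section B.
Variables (CX : Cat) (LX : FinLim CX) (FX : FactSys CX)
  (P : CX -> Prop) (R : Reflection P) (FA : FactSys (FullSub P)).

Lemma dlem (X Y S : CX) (sm : Hom S (prod LX X Y)) :
  exists d : Hom (proj1_sig (fmid FA (Rmor R sm))) (proj1_sig (fmid FA (Rmor R (fm FX (pr2 LX X Y ⊚ sm))))),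
    (fm FA (Rmor R (fm FX (pr2 LX X Y ⊚ sm))) : @Hom CX _ _) ⊚ d
      = (Rmor R (pr2 LX X Y) : @Hom CX _ _) ⊚ (fm FA (Rmor R sm) : @Hom CX _ _) /\
    d ⊚ (fe FA (Rmor R sm) : @Hom CX _ _)
      = (fe FA (Rmor R (fm FX (pr2 LX X Y ⊚ sm))) : @Hom CX _ _) ⊚ (Rmor R (fe FX (pr2 LX X Y ⊚ sm)) : @Hom CX _ _).
Proof.
  assert (Hsq : ((Rmor R (pr2 LX X Y) : @Hom CX _ _) ⊚ (fm FA (Rmor R sm) : @Hom CX _ _)) ⊚ (fe FA (Rmor R sm) : @Hom CX _ _)
     = (fm FA (Rmor R (fm FX (pr2 LX X Y ⊚ sm))) : @Hom CX _ _) ⊚ ((fe FA (Rmor R (fm FX (pr2 LX X Y ⊚ sm))) : @Hom CX _ _) ⊚ (Rmor R (fe FX (pr2 LX X Y ⊚ sm)) : @Hom CX _ _))).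
  { rewrite <- comp_assoc, factA, comp_assoc, factA, <- !Rcomp, fact_eq. reflexivity. }
  destruct (@diag _ FA _ _ _ _ (fe FA (Rmor R sm)) (fm FA (Rmor R (fm FX (pr2 LX X Y ⊚ sm))))
     ((fe FA (Rmor R (fm FX (pr2 LX X Y ⊚ sm))) : @Hom CX _ _) ⊚ (Rmor R (fe FX (pr2 LX X Y ⊚ sm)) : @Hom CX _ _))
     ((Rmor R (pr2 LX X Y) : @Hom CX _ _) ⊚ (fm FA (Rmor R sm) : @Hom CX _ _))
     (fe_E FA _) (fm_M FA _) Hsq) as [d [[H1 H2] _]].
  exists d. split; [exact H2 | exact H1].
Qed.
End B.

Lemma le_fwd (CX : Cat) (LX : FinLim CX) (FX : FactSys CX)
  (P : CX -> Prop) (R : Reflection P) (FA : FactSys (FullSub P))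
  (NM : forall (A B : FullSub P) (f : @Hom (FullSub P) A B), fM FA f -> fM FX (f : @Hom CX _ _))
  (X Y S : CX) (sm : Hom S (prod LX X Y)) :
  exists j : Hom (fmid FX (pr2 LX X Y ⊚ pb1 LX (rho R (prod LX X Y)) (fm FA (Rmor R sm) : @Hom CX _ _)))
                 (pb LX (rho R Y) (fm FA (Rmor R (fm FX (pr2 LX X Y ⊚ sm))) : @Hom CX _ _)),
    fm FX (pr2 LX X Y ⊚ pb1 LX (rho R (prod LX X Y)) (fm FA (Rmor R sm) : @Hom CX _ _))
    = pb1 LX (rho R Y) (fm FA (Rmor R (fm FX (pr2 LX X Y ⊚ sm))) : @Hom CX _ _) ⊚ j.
Proof.
  destruct (@dlem CX LX FX P R FA _ _ _ sm) as [d [Hd _]].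
  set (p1 := pb1 LX (rho R (prod LX X Y)) (fm FA (Rmor R sm) : @Hom CX _ _)).
  set (p2 := pb2 LX (rho R (prod LX X Y)) (fm FA (Rmor R sm) : @Hom CX _ _)).
  assert (Hpb : rho R _ ⊚ p1 = (fm FA (Rmor R sm) : @Hom CX _ _) ⊚ p2) by exact (proj1 (pb_ok LX _ _)).
  assert (Hq : rho R Y ⊚ (pr2 LX X Y ⊚ p1) = (fm FA (Rmor R (fm FX (pr2 LX X Y ⊚ sm))) : @Hom CX _ _) ⊚ (d ⊚ p2)).
  { rewrite comp_assoc, <- rnat, <- comp_assoc, Hpb, comp_assoc, comp_assoc, Hd. reflexivity. }
  destruct (proj2 (pb_ok LX (rho R Y) (fm FA (Rmor R (fm FX (pr2 LX X Y ⊚ sm))) : @Hom CX _ _)) _ _ _ Hq)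
    as [u [[Hu _] _]].
  assert (Hsq : fm FX (pr2 LX X Y ⊚ p1) ⊚ fe FX (pr2 LX X Y ⊚ p1)
     = pb1 LX (rho R Y) (fm FA (Rmor R (fm FX (pr2 LX X Y ⊚ sm))) : @Hom CX _ _) ⊚ u)
    by (rewrite fact_eq, Hu; reflexivity).
  destruct (diag (fe_E FX _) (pb_M LX _ (NM _ _ _ (fm_M FA _))) Hsq) as [j [[_ Hj] _]].
  exists j. symmetry. exact Hj.
Qed.

Lemma le_bwd (CX : Cat) (LX : FinLim CX) (FX : FactSys CX)
  (P : CX -> Prop) (R : Reflection P) (FA : FactSys (FullSub P))
  (properX : proper FX) (properA : proper FA)
  (RE : forall (A B : CX) (f : Hom A B), fE FX f -> fE FA (Rmor R f))
  (Estab : pullback_stable_E FX)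
  (FE : forall (A B : FullSub P) (f : @Hom (FullSub P) A B), fE FA f -> fE FX (f : @Hom CX _ _))
  (X : CX) (Hpres : preserves_products_with LX R X) (HrX : fE FX (rho R X))
  (Y S : CX) (sm : Hom S (prod LX X Y)) :
  exists j : Hom (pb LX (rho R Y) (fm FA (Rmor R (fm FX (pr2 LX X Y ⊚ sm))) : @Hom CX _ _))
                 (fmid FX (pr2 LX X Y ⊚ pb1 LX (rho R (prod LX X Y)) (fm FA (Rmor R sm) : @Hom CX _ _))),
    pb1 LX (rho R Y) (fm FA (Rmor R (fm FX (pr2 LX X Y ⊚ sm))) : @Hom CX _ _)
    = fm FX (pr2 LX X Y ⊚ pb1 LX (rho R (prod LX X Y)) (fm FA (Rmor R sm) : @Hom CX _ _)) ⊚ j.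
Proof.
  destruct (@dlem CX LX FX P R FA _ _ _ sm) as [d [Hd Hd2]].
  assert (HdF : fE FX d).
  { apply (FE _ _ d). apply (@E_cancel _ FA properA _ _ _ (fe FA (Rmor R sm))).
    change (fE FA ((d : @Hom CX _ _) ⊚ (fe FA (Rmor R sm) : @Hom CX _ _))). rewrite Hd2.
    apply (@E_comp _ FA properA _ _ _ (Rmor R (fe FX (pr2 LX X Y ⊚ sm)))); [apply RE, fe_E | apply fe_E]. }
  set (fmn := (fm FA (Rmor R (fm FX (pr2 LX X Y ⊚ sm))) : @Hom CX _ _)) in *.
  set (fmm := (fm FA (Rmor R sm) : @Hom CX _ _)) in *.
  set (q1 := pb1 LX (rho R Y) fmn).
  set (q2 := pb2 LX (rho R Y) fmn).
  assert (Hq : rho R Y ⊚ q1 = fmn ⊚ q2) by exact (proj1 (pb_ok LX _ _)).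
  set (p1 := pb1 LX (rho R (prod LX X Y)) fmm).
  set (p2 := pb2 LX (rho R (prod LX X Y)) fmm).
  assert (Hp : rho R _ ⊚ p1 = fmm ⊚ p2) by exact (proj1 (pb_ok LX _ _)).
  set (r1 := pb1 LX q2 d). set (r2 := pb2 LX q2 d).
  assert (Hr : q2 ⊚ r1 = d ⊚ r2) by exact (proj1 (pb_ok LX _ _)).
  assert (Hr1 : fE FX r1) by exact (Estab _ _ _ _ _ _ _ _ (pb_ok LX q2 d) HdF).
  set (a := (Rmor R (pr1 LX X Y) : @Hom CX _ _) ⊚ (fmm ⊚ r2)).
  set (w1 := pb1 LX a (rho R X)). set (w2 := pb2 LX a (rho R X)).
  assert (Hw : a ⊚ w1 = rho R X ⊚ w2) by exact (proj1 (pb_ok LX _ _)).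
  assert (Hw1 : fE FX w1) by exact (Estab _ _ _ _ _ _ _ _ (pb_ok LX a (rho R X)) HrX).
  destruct (prod_ok LX w2 (q1 ⊚ (r1 ⊚ w1))) as [z [[Hz1 Hz2] _]].
  assert (Hz : rho R (prod LX X Y) ⊚ z = fmm ⊚ (r2 ⊚ w1)).
  { destruct (Hpres Y _ (rho R X ⊚ w2) (rho R Y ⊚ (q1 ⊚ (r1 ⊚ w1)))) as [h [_ Hh]].
    transitivity h; [symmetry|]; apply Hh; split.
    - rewrite comp_assoc, rnat, <- comp_assoc, Hz1. reflexivity.
    - rewrite comp_assoc, rnat, <- comp_assoc, Hz2. reflexivity.
    - rewrite comp_assoc, <- Hw. unfold a. rewrite <- !comp_assoc. reflexivity.
    - rewrite (comp_assoc _ q1), Hq, (comp_assoc (fmn ⊚ q2)), <- (comp_assoc fmn), Hr, (comp_assoc fmn), Hd, <- !comp_assoc. reflexivity. }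
  destruct (proj2 (pb_ok LX (rho R (prod LX X Y)) fmm) _ _ _ Hz) as [wz [[Hwz _] _]].
  assert (Hsq : q1 ⊚ (r1 ⊚ w1) = fm FX (pr2 LX X Y ⊚ p1) ⊚ (fe FX (pr2 LX X Y ⊚ p1) ⊚ wz)).
  { rewrite (comp_assoc (fm FX _)), fact_eq, <- comp_assoc. rewrite (Hwz : p1 ⊚ wz = z), Hz2. reflexivity. }
  destruct (diag (@E_comp _ FX properX _ _ _ _ _ Hw1 Hr1) (fm_M FX _) Hsq) as [j [[_ Hj] _]].
  exists j. symmetry. exact Hj.
Qed.

Theorem corollary2p12
  (CX : Cat) (LX : FinLim CX) (FX : FactSys CX)
  (P : CX -> Prop) (R : Reflection P) (FA : FactSys (FullSub P))
  (Afc : finitely_complete (FullSub P))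
  (properX : proper FX) (properA : proper FA)
  (NM : forall (A B : FullSub P) (f : @Hom (FullSub P) A B), fM FA f -> fM FX (f : @Hom CX _ _))
  (RE : forall (A B : CX) (f : Hom A B), fE FX f -> fE FA (Rmor R f))
  (Estab : pullback_stable_E FX)
  (FE : forall (A B : FullSub P) (f : @Hom (FullSub P) A B), fE FA f -> fE FX (f : @Hom CX _ _))
  (X : CX) (Hpres : preserves_products_with LX R X) :
  compact LX FX (initial_lift LX FX R FA NM (discrete FA)) X <-> fE FX (rho R X).
Proof.
  split.
  - apply fwd; assumption.
  - intros HrX Y m. unfold preserving. destruct m as [S [sm Hsm]]. split.
    + exact (@le_fwd CX LX FX P R FA NM X Y S sm).
    + exact (@le_bwd CX LX FX P R FA properX properA RE Estab FE X Hpres HrX Y S sm).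
Qed.
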